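(* Let $N\ge4$ and $\kappa\in\mathbb R$ be such that the $2(N-1)^3\times2(N-1)^3$ block matrix $\tilde A=\begin{bmatrix}\tilde A^{11}&\tilde A^{12}\\ \tilde A^{21}&\tilde A^{22}\end{bmatrix}$ is nonsingular, and let $A=\begin{bmatrix}A^{11}&A^{12}\\ A^{21}&A^{22}\end{bmatrix}$. Then the eigenspace $\{\boldsymbol v:\tilde A^{-1}A\boldsymbol v=\boldsymbol v\}$ of $\tilde A^{-1}A$ associated with the eigenvalue $1$ has dimension $2(N-3)^3$.
   Context: $M,S$ are the $(N-1)\times(N-1)$ matrices $M_{mn}=(\psi_{n+1},\psi_{m+1})$, $S_{mn}=(\phi_n',\phi_m')$, with $(\cdot,\cdot)$ the $L^2(-1,1)$ inner product, $L_n$ the Legendre polynomial of degree $n$, $P_n^{(-1,-1)}=\frac{n-1}{2(2n-1)}(L_n-L_{n-2})$ ($n\ge2$), $\psi_{m+1}=\frac{\sqrt{2(2m+1)}}{m}P_{m+1}^{(-1,-1)}$, $\phi_m=\sqrt{\frac{2m+1}{2}}L_m$. $I$ is the $(N-1)\times(N-1)$ identity, $\otimes$ the Kronecker product. $A^{11}=S\otimes M\otimes I+S\otimes I\otimes M+I\otimes M\otimes S+I\otimes S\otimes M+2I\otimes I\otimes I+\kappa(I\otimes I\otimes M+I\otimes M\otimes I)$, $A^{22}=M\otimes S\otimes I+S\otimes I\otimes M+M\otimes I\otimes S+I\otimes S\otimes M+2I\otimes I\otimes I+\kappa(I\otimes I\otimes M+M\otimes I\otimes I)$, $A^{12}=A^{21}=S\otimes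 I\otimes M+I\otimes S\otimes M+I\otimes I\otimes I+\kappa I\otimes I\otimes M$, and $\tilde A^{ij}$ is obtained from $A^{ij}$ by replacing every occurrence of $S$ by $M^{-1}$. ($A$ is the interior-mode block of the divergence-free spectral Galerkin matrix for the 3D curl-curl problem $\nabla\times\nabla\times\boldsymbol u+\kappa\boldsymbol u=\boldsymbol f$.) *)

(* Defs.v *)
From HB Require Import structures.
From mathcomp Require Import all_boot all_order all_algebra.
From mathcomp Require Import reals.
From mathcomp.real_closed Require Import mxtens.
Set Implicit Arguments. Unset Strict Implicit. Unset Printing Implicit Defensive.
Import Order.TTheory GRing.Theory Num.Theory.
Local Open Scope ring_scope.

Section Defs.
Variable R : realType.

(* L^2(-1,1) integral of a polynomial: int_{-1}^{1} x^i dx = (1 - (-1)^(i+1))/(i+1) *)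
Definition poly_int11 (p : {poly R}) : R :=
  \sum_(i < size p) p`_i * ((1 - (-1) ^+ i.+1) / i.+1%:R).

Definition ip (p q : {poly R}) : R := poly_int11 (p * q).

Definition legendre (n : nat) : {poly R} :=
  ((2 ^+ n * (n`!)%:R)^-1) *: (('X ^+ 2 - 1) ^+ n)^`(n).

(* P_n^{(-1,-1)} = (n-1)/(2(2n-1)) (L_n - L_{n-2}),  n >= 2 *)
Definition jacobi_m1 (n : nat) : {poly R} :=
  ((n%:R - 1) / (2 * (2 * n%:R - 1))) *: (legendre n - legendre n.-2).

(* psi_{m+1} = sqrt(2(2m+1))/m P_{m+1}^{(-1,-1)} ; [psi m] denotes psi_{m+1} *)
Definition psi (m : nat) : {poly R} :=
  (Num.sqrt (2 * (2 * m%:R + 1)) / m%:R) *: jacobi_m1 m.+1.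

Definition phi (m : nat) : {poly R} :=
  Num.sqrt ((2 * m%:R + 1) / 2) *: legendre m.

(* M_{mn} = (psi_{n+1}, psi_{m+1}),  S_{mn} = (phi_n', phi_m'),  m,n = 1..N-1 *)
Definition Mmx (N : nat) : 'M[R]_(N.-1) :=
  \matrix_(i, j) ip (psi j.+1) (psi i.+1).
Definition Smx (N : nat) : 'M[R]_(N.-1) :=
  \matrix_(i, j) ip (phi j.+1)^`() (phi i.+1)^`().

Notation "A *t B" := (tensmx A B) (at level 40, left associativity).

Definition blockA (n : nat) (S M : 'M[R]_n) (kappa : R)
  : 'M[R]_(n * n * n + n * n * n) :=
  let I := (1%:M : 'M[R]_n) in
  let A11 := S *t M *t I + S *t I *t M + I *t M *t S + I *t S *t M
             + 2%:R *: (I *t I *t I) + kappa *: (I *t I *t M + I *t M *t I) in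
  let A22 := M *t S *t I + S *t I *t M + M *t I *t S + I *t S *t M
             + 2%:R *: (I *t I *t I) + kappa *: (I *t I *t M + M *t I *t I) in
  let A12 := S *t I *t M + I *t S *t M + I *t I *t I + kappa *: (I *t I *t M) in
  block_mx A11 A12 A12 A22.

Definition Amx (N : nat) (kappa : R) := blockA (Smx N) (Mmx N) kappa.
Definition Atilde (N : nat) (kappa : R) := blockA (invmx (Mmx N)) (Mmx N) kappa.

End Defs.

(* Main.v *)
Require Import Defs.
From HB Require Import structures.
From mathcomp Require Import all_boot all_order all_algebra.
From mathcomp Require Import reals.
From mathcomp.real_closed Require Import mxtens.
From mathcomp Require Import ring lra zify.
Set Implicit Arguments. Unset Strict Implicit. Unset Printing Implicit Defensive.
Import Order.TTheory GRing.Theory Num.Theory.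
Local Open Scope ring_scope.

Section Int.
Variable R : realType.
Implicit Types p q : {poly R}.

Definition om (i : nat) : R := (1 - (-1) ^+ i.+1) / i.+1%:R.

Lemma int11E n p : (size p <= n)%N -> poly_int11 p = \sum_(i < n) p`_i * om i.
Proof.
move=> hn; rewrite /poly_int11 (big_ord_widen n (fun i => p`_i * om i) hn).
rewrite big_mkcond; apply: eq_bigr => i _; case: ifP => // /negbT.
by rewrite -leqNgt => h; rewrite nth_default // mul0r.
Qed.

Lemma int11D p q : poly_int11 (p + q) = poly_int11 p + poly_int11 q.
Proof.
set n := maxn (size p) (size q).
rewrite (@int11E n) ?(leq_trans (size_polyD _ _)) //.
rewrite (@int11E n p) ?leq_maxl // (@int11E n q) ?leq_maxr // -big_split.
by apply: eq_bigr => i _; rewrite coefD mulrDl.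
Qed.

Lemma int11Z c p : poly_int11 (c *: p) = c * poly_int11 p.
Proof.
rewrite (@int11E (size p)) ?size_scale_leq // /poly_int11 mulr_sumr.
by apply: eq_bigr => i _; rewrite coefZ mulrA.
Qed.

Lemma int11N p : poly_int11 (- p) = - poly_int11 p.
Proof. by rewrite -scaleN1r int11Z mulN1r. Qed.

Lemma int11B p q : poly_int11 (p - q) = poly_int11 p - poly_int11 q.
Proof. by rewrite int11D int11N. Qed.

Lemma int11_sum (I : Type) (r : seq I) (F : I -> {poly R}) :
  poly_int11 (\sum_(i <- r) F i) = \sum_(i <- r) poly_int11 (F i).
Proof.
elim: r => [|a r IH]; last by rewrite !big_cons int11D IH.
by rewrite !big_nil /poly_int11 size_poly0 big_ord0.
Qed.

Lemma size_deriv_le p : (size p^`() <= size p)%N.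
Proof. by case: (eqVneq p 0) => [->|/lt_size_deriv/ltnW //]; rewrite deriv0. Qed.

Lemma int11_deriv p : poly_int11 p^`() = p.[1] - p.[-1].
Proof.
rewrite (@int11E (size p)) ?size_deriv_le //.
rewrite !horner_coef -sumrB.
case E: (size p) => [|n]; first by rewrite !big_ord0.
rewrite big_ord_recr /= [in RHS]big_ord_recl /=.
rewrite coef_deriv (nth_default 0 (_ : (size p <= n.+1)%N)) ?E //.
rewrite mul0rn mul0r addr0 expr0 subrr add0r.
apply: eq_bigr => i _; rewrite coef_deriv /om expr1n -mulrBr -mulr_natr.
rewrite [_ ^+ i.+1]exprS mulN1r opprK.
have h : (i.+1%:R : R) != 0 by rewrite pnatr_eq0.
rewrite /bump leq0n add1n -mulr_natr mul1r; field; by rewrite nat1r.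
Qed.

End Int.

Section Leg.
Variable R : realType.
Implicit Types p q : {poly R}.
Local Notation ip := (@ip R).
Local Notation L := (@legendre R).

Lemma ipC p q : ip p q = ip q p.
Proof. by rewrite /ip mulrC. Qed.
Lemma ipDl p q r : ip (p + q) r = ip p r + ip q r.
Proof. by rewrite /ip mulrDl int11D. Qed.
Lemma ipDr p q r : ip r (p + q) = ip r p + ip r q.
Proof. by rewrite ![ip r _]ipC ipDl. Qed.
Lemma ipZl c p q : ip (c *: p) q = c * ip p q.
Proof. by rewrite /ip -scalerAl int11Z. Qed.
Lemma ipZr c p q : ip q (c *: p) = c * ip q p.
Proof. by rewrite ![ip q _]ipC ipZl. Qed.
Lemma ipNl p q : ip (- p) q = - ip p q.
Proof. by rewrite -scaleN1r ipZl mulN1r. Qed.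
Lemma ipNr p q : ip q (- p) = - ip q p.
Proof. by rewrite ![ip q _]ipC ipNl. Qed.
Lemma ipBl p q r : ip (p - q) r = ip p r - ip q r.
Proof. by rewrite ipDl ipNl. Qed.
Lemma ipBr p q r : ip r (p - q) = ip r p - ip r q.
Proof. by rewrite ipDr ipNr. Qed.
Lemma ip0l q : ip 0 q = 0.
Proof. by rewrite -(scale0r 0) ipZl mul0r. Qed.
Lemma ip0r q : ip q 0 = 0.
Proof. by rewrite ipC ip0l. Qed.
Lemma ip_suml (I : Type) (r : seq I) (F : I -> {poly R}) q :
  ip (\sum_(i <- r) F i) q = \sum_(i <- r) ip (F i) q.
Proof.
elim: r => [|a r IH]; first by rewrite !big_nil ip0l.
by rewrite !big_cons ipDl IH.
Qed.
Lemma ip_sumr (I : Type) (r : seq I) (F : I -> {poly R}) q :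
  ip q (\sum_(i <- r) F i) = \sum_(i <- r) ip q (F i).
Proof. by rewrite ipC ip_suml; apply: eq_bigr => i _; rewrite ipC. Qed.

Lemma ibp p q : ip p^`() q = (p * q).[1] - (p * q).[-1] - ip p q^`().
Proof. by rewrite -int11_deriv /ip derivM int11D addrK. Qed.

Lemma derXa (a : R) n q :
  (('X - a%:P) ^+ n.+1 * q)^`() =
  ('X - a%:P) ^+ n * (n.+1%:R%:P * q + ('X - a%:P) * q^`()).
Proof.
rewrite derivM deriv_exp derivXsubC mul1r /= -mulr_natr exprS.
rewrite -[_ *+ _]mulr_natr polyC_natr; ring.
Qed.

Lemma tay_lt (a : R) n k q : (k < n)%N ->
  (('X - a%:P) ^+ n * q)^`(k).[a] = 0.
Proof.
elim: n k q => [|n IH] [|k] q //= hk.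
  by rewrite hornerM horner_exp hornerXsubC subrr expr0n /= mul0r.
by rewrite -derivnS derivSn derXa IH.
Qed.

Lemma tay_eq (a : R) n q :
  (('X - a%:P) ^+ n * q)^`(n).[a] = n`!%:R * q.[a].
Proof.
elim: n q => [|n IH] q; first by rewrite expr0 mul1r derivn0 mul1r.
rewrite derivSn derXa IH hornerD !hornerM hornerXsubC subrr mul0r addr0.
by rewrite hornerC factS natrM mulrA [n.+1%:R * _]mulrC.
Qed.


Definition W n : {poly R} := ('X ^+ 2 - 1) ^+ n.

Lemma Wfact1 n : W n = ('X - 1%:P) ^+ n * ('X - (-1)%:P) ^+ n.
Proof. by rewrite /W -exprMn polyCN polyC1; congr (_ ^+ _); ring. Qed.
Lemma Wfact2 n : W n = ('X - (-1)%:P) ^+ n * ('X - 1%:P) ^+ n.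
Proof. by rewrite Wfact1 mulrC. Qed.

Lemma W_lt1 n k : (k < n)%N -> (W n)^`(k).[1] = 0.
Proof. by move=> h; rewrite Wfact1 tay_lt. Qed.
Lemma W_ltm1 n k : (k < n)%N -> (W n)^`(k).[-1] = 0.
Proof. by move=> h; rewrite Wfact2 tay_lt. Qed.
Lemma W_eq1 n : (W n)^`(n).[1] = n`!%:R * 2 ^+ n.
Proof.
by rewrite Wfact1 tay_eq horner_exp hornerXsubC opprK.
Qed.
Lemma W_eqm1 n : (W n)^`(n).[-1] = n`!%:R * (-2) ^+ n.
Proof.
rewrite Wfact2 tay_eq horner_exp hornerXsubC; congr (_ * _ ^+ _); ring.
Qed.

Lemma ibpW n k q : (k <= n)%N ->
  ip q (W n)^`(k) = (-1) ^+ k * ip q^`(k) (W n).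
Proof.
elim: k q => [|k IH] q hk; first by rewrite !derivn0 mul1r.
rewrite derivnS ipC ibp !hornerM W_lt1 ?W_ltm1 // !mul0r subrr sub0r.
rewrite ipC IH ?(ltnW hk) // -derivSn exprS; ring.
Qed.


Lemma monicW n : W n \is monic.
Proof. by apply: monic_exp; exact: (monicXnsubC 1 (isT : (0 < 2)%N)). Qed.

Lemma sizeW n : size (W n) = (2 * n).+1.
Proof.
have e : (size (W n)).-1 = (2 * n)%N.
  have h3 : size ('X ^+ 2 - 1 : {poly R}) = 3%N.
    exact: (size_XnsubC 1 (isT : (0 < 2)%N)).
  have -> : (2 * n = (size ('X ^+ 2 - 1 : {poly R})%R).-1 * n)%N by rewrite h3.
  exact: size_exp.
have : W n != 0 by rewrite monic_neq0 // monicW.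
by rewrite -size_poly_gt0 -e; case: (size (W n)).
Qed.

Lemma leadW n : (W n)`_(2 * n) = 1.
Proof. by have := monicW n; rewrite monicE /lead_coef sizeW => /eqP. Qed.

Definition cL n : R := (2 ^+ n * (n`!)%:R)^-1.

Lemma LE n : L n = cL n *: (W n)^`(n).
Proof. by []. Qed.

Lemma cL_neq0 n : cL n != 0.
Proof. by rewrite invr_eq0 mulf_neq0 ?expf_neq0 ?pnatr_eq0 -?lt0n ?fact_gt0. Qed.

Lemma coefL n i : (L n)`_i = cL n * ((W n)`_(n + i) *+ (n + i) ^_ n).
Proof. by rewrite LE coefZ coef_derivn. Qed.

Lemma sizeL n : (size (L n) <= n.+1)%N.
Proof.
apply/leq_sizeP => j hj; rewrite coefL nth_default ?mul0rn ?mulr0 //.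
by rewrite sizeW; lia.
Qed.

Lemma lcL n : (L n)`_n = cL n * ((2 * n)`!%:R / n`!%:R).
Proof.
rewrite coefL addnn -mul2n leadW; congr (_ * _).
have h : (n <= 2 * n)%N by rewrite leq_pmull.
rewrite -(ffact_fact h) (_ : (2 * n - n = n)%N); last by lia.
by rewrite natrM mulrK // unitfE pnatr_eq0 -lt0n fact_gt0.
Qed.

Lemma lcL_neq0 n : (L n)`_n != 0.
Proof.
rewrite lcL mulf_neq0 ?cL_neq0 // mulf_neq0 ?invr_eq0 ?pnatr_eq0 -?lt0n ?fact_gt0 //.
Qed.

Lemma L1 n : (L n).[1] = 1.
Proof.
rewrite LE hornerZ W_eq1 /cL mulrC [n`!%:R * _]mulrC mulfV //.
by rewrite mulf_neq0 ?expf_neq0 ?pnatr_eq0 -?lt0n ?fact_gt0.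
Qed.

Lemma Lm1 n : (L n).[-1] = (-1) ^+ n.
Proof.
rewrite LE hornerZ W_eqm1 /cL (_ : (-2 : R) ^+ n = (-1) ^+ n * 2 ^+ n).
  have h1 : (n`!%:R : R) != 0 by rewrite pnatr_eq0 -lt0n fact_gt0.
  have h2 : (2 ^+ n : R) != 0 by rewrite expf_neq0 // pnatr_eq0.
  by field; apply/andP.
by rewrite -mulN1r exprMn.
Qed.

Lemma orthL n q : (size q <= n)%N -> ip q (L n) = 0.
Proof.
move=> h; rewrite LE ipZr ibpW // derivn_poly0 // ip0l; ring.
Qed.

Lemma derivn_top p n : (size p <= n.+1)%N -> p^`(n) = (p`_n *+ n`!)%:P.
Proof.
move=> h; apply/polyP => i; rewrite coef_derivn coefC.
case: i => [|i] /=; first by rewrite addn0 ffactnn.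
by rewrite nth_default ?mul0rn // (leq_trans h) // addnS ltnS leq_addr.
Qed.

Definition IW n := poly_int11 (W n).

Lemma auxid (T : comRingType) (X Y : T) (n : nat) :
  (X ^+ 2 - 1) * Y + X * ((X + X) * Y * n.+1%:R) =
  (2 * n + 3)%:R * ((X ^+ 2 - 1) * Y) + (2 * n + 2)%:R * Y.
Proof. ring. Qed.

Lemma dXW n : ('X * W n.+1)^`() =
  (2 * n + 3)%:R *: W n.+1 + (2 * n + 2)%:R *: W n.
Proof.
rewrite /W derivM derivX mul1r deriv_exp !derivE /= exprS.
rewrite !mulr1 mul1r subr0 -mulr_natr -!mul_polyC !polyC_natr.
exact: auxid.
Qed.

Lemma IW_rec n : (2 * n + 3)%:R * IW n.+1 = - ((2 * n + 2)%:R * IW n).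
Proof.
have := int11_deriv ('X * W n.+1).
rewrite dXW int11D !int11Z !hornerM !hornerX.
have -> : (W n.+1).[1] = 0 by have := W_lt1 (ltn0Sn n); rewrite derivn0.
have -> : (W n.+1).[-1] = 0 by have := W_ltm1 (ltn0Sn n); rewrite derivn0.
by rewrite !mulr0 subrr /IW => /eqP; rewrite addr_eq0 => /eqP.
Qed.

Lemma IW0 : IW 0 = 2.
Proof.
rewrite /IW /W expr0 /poly_int11 size_poly1 big_ord1 expr1 opprK.
by rewrite -polyC1 coefC /= mul1r divr1.
Qed.

Lemma IW_closed n :
  IW n * (2 * n).+1`!%:R = (-1) ^+ n * 2 * (2 ^+ n * n`!%:R) ^+ 2.
Proof.
elim: n => [|n IH].
  rewrite IW0 expr0 mul1r (_ : ((2 * 0).+1`! = 1)%N) // (_ : (0`! = 1)%N) //.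
  by rewrite expr0 !mul1r expr1n !mulr1.
have h := IW_rec n.
have e : ((2 * n.+1).+1`! = (2 * n + 3) * (2 * n + 2) * (2 * n).+1`!)%N.
  rewrite (_ : (2 * n.+1).+1 = (2 * n).+1.+2)%N; last by lia.
  rewrite !factS; lia.
have hn : (2 * n + 3)%:R != 0 :> R by rewrite pnatr_eq0 addn3.
have hf : (2 * n).+1`!%:R != 0 :> R by rewrite pnatr_eq0 -lt0n fact_gt0.
have eIW : IW n.+1 = - ((2 * n + 2)%:R * IW n) / (2 * n + 3)%:R.
  by rewrite -h mulrC mulKf.
have eIWn : IW n = (-1) ^+ n * 2 * (2 ^+ n * n`!%:R) ^+ 2 / (2 * n).+1`!%:R.
  by rewrite -IH mulfK.
rewrite e eIW eIWn factS.
move: hf eIWn; set F := ((2 * n).+1)`!; set G := n`! => hf eIWn.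
rewrite !natrM !exprS.
rewrite (_ : (2 * n + 2)%:R = 2 * n.+1%:R :> R); last first.
  by rewrite -natrM; congr _%:R; lia.
have hn0 := ler0n R n.
field; apply/and3P; split; apply: lt0r_neq0; rewrite ?ltr0n ?fact_gt0 //; lra.
Qed.

Lemma normL n : ip (L n) (L n) = 2 / (2 * n + 1)%:R.
Proof.
rewrite {2}LE ipZr ibpW // derivn_top ?sizeL // /ip mul_polyC int11Z -/(IW n).
have e := IW_closed n.
have hf : (2 * n).+1`!%:R != 0 :> R by rewrite pnatr_eq0 -lt0n fact_gt0.
have eIWn : IW n = (-1) ^+ n * 2 * (2 ^+ n * n`!%:R) ^+ 2 / (2 * n).+1`!%:R.
  by rewrite -e mulfK.
rewrite eIWn lcL /cL.
have e2 : ((2 * n).+1`! = (2 * n + 1) * (2 * n)`!)%N by rewrite factS addn1.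
rewrite e2 -mulr_natr natrM.
have h1 : (n`!%:R : R) != 0 by rewrite pnatr_eq0 -lt0n fact_gt0.
have h2 : ((2 * n)`!%:R : R) != 0 by rewrite pnatr_eq0 -lt0n fact_gt0.
have h3 : ((2 * n + 1)%:R : R) != 0 by rewrite pnatr_eq0 addn1.
have h4 : (2 ^+ n : R) != 0 by rewrite expf_neq0 // pnatr_eq0.
rewrite -mulr_natr.
have hs : ((-1) ^+ n : R) = ((-1) ^+ n)^-1 by rewrite -exprVn invrN1.
have hs0 : ((-1) ^+ n : R) != 0 by rewrite expf_neq0 // oppr_eq0 oner_eq0.
rewrite {1}hs.
have hn0 := ler0n R n.
field; apply/and5P; split=> //; first (apply: lt0r_neq0; lra).
by rewrite !mul1r.
Qed.

End Leg.

Section Phi.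
Variable R : realType.
Implicit Types p q : {poly R}.
Local Notation ip := (@ip R).
Local Notation L := (@legendre R).
Local Notation phi := (@phi R).

Definition sp (m : nat) : R := Num.sqrt ((2 * m%:R + 1) / 2).

Lemma sp_gt0 m : 0 < sp m.
Proof. by rewrite sqrtr_gt0; have := ler0n R m; lra. Qed.

Lemma sp_sq m : sp m ^+ 2 = (2 * m%:R + 1) / 2.
Proof. by rewrite sqr_sqrtr //; have := ler0n R m; lra. Qed.

Lemma phiE m : phi m = sp m *: L m.
Proof. by []. Qed.

Lemma LphiE m : L m = (sp m)^-1 *: phi m.
Proof. by rewrite phiE scalerA mulVf ?scale1r // gt_eqF // sp_gt0. Qed.

Lemma ortho_phi i j : ip (phi i) (phi j) = (i == j)%:R.
Proof.
rewrite !phiE ipZl ipZr.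
have [hij|hij|<-] := ltngtP i j.
- by rewrite orthL ?mulr0 // (leq_trans (sizeL _ _)).
- by rewrite ipC orthL ?mulr0 // (leq_trans (sizeL _ _)).
rewrite normL mulrA -expr2 sp_sq natrD natrM /=.
by field; apply: lt0r_neq0; have := ler0n R i; lra.
Qed.

Lemma spanL k p : (size p <= k)%N -> exists c : nat -> R, p = \sum_(i < k) c i *: L i.
Proof.
elim: k p => [|k IH] p hp.
  by exists (fun _ => 0); rewrite big_ord0; apply/eqP; rewrite -size_poly_leq0.
set d := p`_k / (L k)`_k.
have hq : (size (p - d *: L k)%R <= k)%N.
  apply/leq_sizeP => j hj; rewrite coefB coefZ.
  case: (eqVneq j k) => [->|hjk].
    by rewrite /d mulfVK ?subrr // lcL_neq0.
  rewrite !nth_default ?mulr0 ?subrr //.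
    by apply: (leq_trans (sizeL _ _)); lia.
  by apply: (leq_trans hp); lia.
have [c hc] := IH _ hq.
exists (fun i => if i == k then d else c i).
rewrite big_ord_recr /= eqxx -[p](subrK (d *: L k)) hc; congr (_ + _).
by apply: eq_bigr => i _; rewrite ltn_eqF.
Qed.

Lemma coord_phi k (d : nat -> R) p j : (j < k)%N ->
  p = \sum_(i < k) d i *: phi i -> ip p (phi j) = d j.
Proof.
move=> hj ->; rewrite ip_suml (bigD1 (Ordinal hj)) //= ipZl ortho_phi eqxx mulr1.
rewrite big1 ?addr0 // => i /eqP hi; rewrite ipZl ortho_phi.
by case: eqP => [h|]; [case: hi; apply: val_inj | rewrite mulr0].
Qed.

Lemma expand k p : (size p <= k)%N ->
  p = \sum_(i < k) ip p (phi i) *: phi i.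
Proof.
move=> hp; have [c hc] := spanL hp.
have hd : p = \sum_(i < k) (c i / sp i) *: phi i.
  by rewrite {1}hc; apply: eq_bigr => i _; rewrite LphiE scalerA.
rewrite {1}hd; apply: eq_bigr => i _; congr (_ *: _).
by symmetry; apply: (coord_phi (d := fun i0 => c i0 / sp i0) (ltn_ord i) hd).
Qed.

Lemma ipexp k p q : (size p <= k)%N ->
  ip p q = \sum_(i < k) ip p (phi i) * ip q (phi i).
Proof.
move=> hp; rewrite {1}(expand hp) ip_suml; apply: eq_bigr => i _.
by rewrite ipZl [ip (phi _) q]ipC.
Qed.

End Phi.

Section Psi.
Variable R : realType.
Implicit Types p q : {poly R}.
Local Notation ip := (@ip R).
Local Notation L := (@legendre R).
Local Notation phi := (@phi R).
Local Notation psi := (@psi R).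
Local Notation sp := (@sp R).

Lemma size_deriv_pred p : (size p^`() <= (size p).-1)%N.
Proof.
apply/leq_sizeP => j hj; rewrite coef_deriv nth_default ?mul0rn //.
by apply: leq_trans (leqSpred _) _; rewrite ltnS.
Qed.

Lemma L0E : L 0 = 1.
Proof. by rewrite LE /cL /W expr0 derivn0 expr0 mul1r invr1 scale1r. Qed.

Lemma L1X : L 1 = 'X.
Proof.
rewrite LE /cL /W expr1 derivn1 !derivE /= subr0 expr1 -scaler_nat scalerA.
rewrite (_ : (1`! = 1)%N) // mulr1 mulVf ?scale1r //.
by rewrite pnatr_eq0.
Qed.

Lemma lc_rel m : (L m.+1)`_m.+1 * m.+1%:R = (2 * m + 1)%:R * (L m)`_m.
Proof.
rewrite !lcL /cL.
have e1 : ((2 * m.+1)`! = (2 * m + 2) * (2 * m + 1) * (2 * m)`!)%N.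
  rewrite (_ : (2 * m.+1 = (2 * m).+2)%N); last by lia.
  rewrite !factS; lia.
rewrite e1 factS.
move: (fact_gt0 m) (fact_gt0 (2 * m)); set F := m`!; set G := (2 * m)`! => hF hG.
rewrite !natrM exprS.
have hF' : (F%:R : R) != 0 by rewrite pnatr_eq0 -lt0n.
have hG' : (G%:R : R) != 0 by rewrite pnatr_eq0 -lt0n.
have h2 : (2 ^+ m : R) != 0 by rewrite expf_neq0 // pnatr_eq0.
rewrite (_ : (2 * m + 2)%:R = 2 * m.+1%:R :> R); last by rewrite -natrM; congr _%:R; lia.
have hm := ler0n R m.
field; rewrite h2 hF' /=; apply: lt0r_neq0; rewrite ?natrD ?natrM; lra.
Qed.


Lemma size_phi m : (size (phi m) <= m.+1)%N.
Proof. by rewrite phiE (leq_trans (size_scale_leq _ _)) ?sizeL. Qed.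

Lemma size_dphi m : (size (phi m)^`() <= m)%N.
Proof. apply: leq_trans (size_deriv_pred _) _; have := size_phi m; by case: (size _). Qed.

Lemma coefL_big n j : (n < j)%N -> (L n)`_j = 0.
Proof. by move=> h; rewrite nth_default // (leq_trans (sizeL _ _)). Qed.

Lemma dL m : (0 < m)%N ->
  (L m.+1 - L m.-1)^`() = (2 * m + 1)%:R *: L m.
Proof.
move=> hm; apply/eqP; rewrite -subr_eq0; apply/eqP.
set r := (_ - _)%R.
have hsz : (size r <= m)%N.
  apply/leq_sizeP => j hj; rewrite /r coefB coefZ coef_deriv coefB.
  case: (eqVneq j m) => [->|hjm].
    rewrite (coefL_big (n := m.-1) (j := m.+1)); last by lia.
    by rewrite subr0 -[_ *+ m.+1]mulr_natr lc_rel; ring.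
  rewrite (coefL_big (n := m.+1) (j := j.+1)); last by lia.
  rewrite (coefL_big (n := m.-1) (j := j.+1)); last by lia.
  rewrite (coefL_big (n := m) (j := j)); last by lia.
  by rewrite subrr mul0rn mulr0 subrr.
rewrite (expand hsz) big1 // => i _.
have hi := ltn_ord i.
rewrite /r ipBl ipZl [ip (L m) _]ipC orthL ?mulr0 ?subr0; last first.
  by apply: (leq_trans (size_phi _)).
rewrite ibp !hornerM !hornerD !hornerN !L1 !Lm1 subrr.
rewrite (_ : (-1) ^+ m.+1 = (-1) ^+ m.-1 :> R); last first.
  by case: (m) hm => // m0 _; rewrite !exprS !mulN1r opprK.
rewrite subrr !mul0r subrr sub0r ipBl [ip (L _) _]ipC orthL; last first.
  by apply: (leq_trans (size_dphi _)); lia.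
rewrite [ip (L _) _]ipC orthL ?subrr ?oppr0 ?scale0r //.
by apply: (leq_trans (size_dphi _)); lia.
Qed.


Definition apsi (m : nat) : R := Num.sqrt (2 * (2 * m%:R + 1)) / m%:R *
  ((m.+1%:R - 1) / (2 * (2 * m.+1%:R - 1))).

Lemma psiE m : psi m = apsi m *: (L m.+1 - L m.-1).
Proof. by rewrite /psi /jacobi_m1 scalerA. Qed.

Lemma sp_alt m : sp m = Num.sqrt (2 * (2 * m%:R + 1)) / 2 :> R.
Proof.
have hm := ler0n R m.
have h0 : 0 <= Num.sqrt (2 * (2 * m%:R + 1)) / 2 :> R.
  by rewrite divr_ge0 ?sqrtr_ge0.
rewrite /sp -[RHS]ger0_norm // -sqrtr_sqr expr_div_n sqr_sqrtr; last lra.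
by congr Num.sqrt; field.
Qed.

Lemma dpsi m : (0 < m)%N -> (psi m)^`() = phi m.
Proof.
move=> hm; rewrite psiE derivZ dL // scalerA phiE; congr (_ *: _).
rewrite sp_alt /apsi -!natr1 natrD natrM.
have hm' : 0 < m%:R :> R by rewrite ltr0n.
field; apply/andP; split; apply: lt0r_neq0; lra.
Qed.

Lemma psi1 m : (0 < m)%N -> (psi m).[1] = 0.
Proof. by move=> hm; rewrite psiE hornerZ hornerD hornerN !L1 subrr mulr0. Qed.

Lemma psim1 m : (0 < m)%N -> (psi m).[-1] = 0.
Proof.
move=> hm; rewrite psiE hornerZ hornerD hornerN !Lm1.
by case: m hm => // m _; rewrite !exprS !mulN1r opprK subrr mulr0.
Qed.

Lemma size_psi m : (size (psi m) <= m.+2)%N.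
Proof.
rewrite psiE (leq_trans (size_scale_leq _ _)) // (leq_trans (size_polyD _ _)) //.
rewrite geq_max size_polyN sizeL (leq_trans (sizeL _ _)) //; lia.
Qed.

Lemma dphi1 : (phi 1)^`() = (sp 1)%:P.
Proof. by rewrite phiE derivZ L1X derivX -mul_polyC mulr1. Qed.

Lemma dphi2 : (phi 2)^`() = (3 * sp 2) *: 'X.
Proof.
have := dL (isT : (0 < 1)%N); rewrite /= L0E derivB derivC subr0 L1X => h.
by rewrite phiE derivZ h scalerA mulrC.
Qed.

End Psi.

Section Tens.
Variable R : realType.

Lemma tensmxDl m n p q (A B : 'M[R]_(m, n)) (C : 'M[R]_(p, q)) :
  (A + B) *t C = A *t C + B *t C.
Proof. by apply/matrixP => i j; rewrite !mxE mulrDl. Qed.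
Lemma tensmxDr m n p q (A : 'M[R]_(m, n)) (B C : 'M[R]_(p, q)) :
  A *t (B + C) = A *t B + A *t C.
Proof. by apply/matrixP => i j; rewrite !mxE mulrDr. Qed.
Lemma tensmxNl m n p q (A : 'M[R]_(m, n)) (C : 'M[R]_(p, q)) :
  (- A) *t C = - (A *t C).
Proof. by apply/matrixP => i j; rewrite !mxE mulNr. Qed.
Lemma tensmxNr m n p q (A : 'M[R]_(m, n)) (C : 'M[R]_(p, q)) :
  A *t (- C) = - (A *t C).
Proof. by apply/matrixP => i j; rewrite !mxE mulrN. Qed.
Lemma tensmxBl m n p q (A B : 'M[R]_(m, n)) (C : 'M[R]_(p, q)) :
  (A - B) *t C = A *t C - B *t C.
Proof. by rewrite tensmxDl tensmxNl. Qed.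
Lemma tensmxBr m n p q (A : 'M[R]_(m, n)) (B C : 'M[R]_(p, q)) :
  A *t (B - C) = A *t B - A *t C.
Proof. by rewrite tensmxDr tensmxNr. Qed.

Lemma tens0l m n p q (C : 'M[R]_(p, q)) : (0 : 'M[R]_(m, n)) *t C = 0.
Proof. by apply/matrixP => i j; rewrite !mxE mul0r. Qed.
Lemma tens0r m n p q (C : 'M[R]_(p, q)) : C *t (0 : 'M[R]_(m, n)) = 0.
Proof. by apply/matrixP => i j; rewrite !mxE mulr0. Qed.

Lemma tens11 a b : (1%:M : 'M[R]_a) *t (1%:M : 'M[R]_b) = 1%:M.
Proof.
apply/matrixP => i j.
case: (mxtens_indexP i) => i1 i2; case: (mxtens_indexP j) => j1 j2.
rewrite tensmxE !mxE (inj_eq (can_inj (@mxtens_indexK _ _))) xpair_eqE.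
by rewrite -natrM mulnb.
Qed.

Lemma tens111 a b c :
  (1%:M : 'M[R]_a) *t (1%:M : 'M[R]_b) *t (1%:M : 'M[R]_c) = 1%:M.
Proof. by rewrite !tens11. Qed.

Lemma tmul3 m1 n1 m2 n2 m3 n3 r1 r2 r3
  (A1 : 'M[R]_(m1, n1)) (A2 : 'M[R]_(m2, n2)) (A3 : 'M[R]_(m3, n3))
  (B1 : 'M[R]_(n1, r1)) (B2 : 'M[R]_(n2, r2)) (B3 : 'M[R]_(n3, r3)) :
  (A1 *t A2 *t A3) *m (B1 *t B2 *t B3) = (A1 *m B1) *t (A2 *m B2) *t (A3 *m B3).
Proof. by rewrite !tensmx_mul. Qed.

Lemma ttr3 m1 n1 m2 n2 m3 n3
  (A1 : 'M[R]_(m1, n1)) (A2 : 'M[R]_(m2, n2)) (A3 : 'M[R]_(m3, n3)) :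
  (A1 *t A2 *t A3)^T = A1^T *t A2^T *t A3^T.
Proof. by rewrite !trmx_tens. Qed.

Lemma trD m n (A B : 'M[R]_(m, n)) : (A + B)^T = A^T + B^T.
Proof. by apply/matrixP => i j; rewrite !mxE. Qed.
Lemma trN m n (A : 'M[R]_(m, n)) : (- A)^T = - A^T.
Proof. by apply/matrixP => i j; rewrite !mxE. Qed.
Lemma trB m n (A B : 'M[R]_(m, n)) : (A - B)^T = A^T - B^T.
Proof. by rewrite trD trN. Qed.

Definition sq k (x : 'rV[R]_k) : R := (x *m x^T) 0 0.

Lemma sqE k (x : 'rV[R]_k) : sq x = \sum_j x 0 j ^+ 2.
Proof. by rewrite /sq mxE; apply: eq_bigr => j _; rewrite mxE expr2. Qed.

Lemma sq_ge0 k (x : 'rV[R]_k) : 0 <= sq x.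
Proof. by rewrite sqE sumr_ge0 // => j _; rewrite sqr_ge0. Qed.

Lemma sq_eq0 k (x : 'rV[R]_k) : sq x = 0 -> x = 0.
Proof.
rewrite sqE => /psumr_eq0P h; apply/matrixP => i j.
rewrite [i]ord1 mxE; apply/eqP; rewrite -sqrf_eq0; apply/eqP.
by apply: h => // l _; rewrite sqr_ge0.
Qed.


Definition blockH m (D M : 'M[R]_m) : 'M[R]_(m * m * m + m * m * m) :=
  let I := (1%:M : 'M[R]_m) in
  block_mx (D *t M *t I + D *t I *t M + I *t M *t D + I *t D *t M)
           (D *t I *t M + I *t D *t M)
           (D *t I *t M + I *t D *t M)
           (M *t D *t I + D *t I *t M + M *t I *t D + I *t D *t M).

Definition bil m (X : 'M[R]_m) (a b : 'rV[R]_m) : R := (a *m X *m b^T) 0 0.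

Lemma addmxE m n (A B : 'M[R]_(m, n)) i j : (A + B) i j = A i j + B i j.
Proof. by rewrite mxE. Qed.

Lemma bilD m (X Y : 'M[R]_m) a b : bil (X + Y) a b = bil X a b + bil Y a b.
Proof. by rewrite /bil mulmxDr mulmxDl addmxE. Qed.
Lemma bilDl m (X : 'M[R]_m) a b c : bil X (a + b) c = bil X a c + bil X b c.
Proof. by rewrite /bil !mulmxDl addmxE. Qed.
Lemma bilDr m (X : 'M[R]_m) a b c : bil X c (a + b) = bil X c a + bil X c b.
Proof. by rewrite /bil trD mulmxDr addmxE. Qed.
Lemma bilC m (X : 'M[R]_m) a b : X^T = X -> bil X a b = bil X b a.
Proof.
move=> hX; rewrite /bil; transitivity ((b *m X *m a^T)^T 0 0); last by rewrite mxE.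
by rewrite !trmx_mul trmxK hX mulmxA.
Qed.
Lemma bilYY m q (Y : 'M[R]_(m, q)) a : bil (Y *m Y^T) a a = sq (a *m Y).
Proof. by rewrite /bil /sq trmx_mul !mulmxA. Qed.

Lemma bil_block m (A B C Dd : 'M[R]_m) (u w : 'rV[R]_m) :
  (row_mx u w *m block_mx A B C Dd *m (row_mx u w)^T) 0 0 =
  bil A u u + bil C w u + bil B u w + bil Dd w w.
Proof.
rewrite mul_row_block tr_row_mx mul_row_col !mulmxDl !addmxE /bil.
by rewrite addrA.
Qed.

Lemma rank_rinv a b (X : 'M[R]_(a, b)) (Y : 'M[R]_(b, a)) :
  X *m Y = 1%:M -> \rank X = a.
Proof.
move=> h; apply/eqP; rewrite eqn_leq rank_leq_row /=.
by have := mxrankM_maxl X Y; rewrite h mxrank1.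
Qed.

Section Kern.
Variables (n p : nat) (H F : 'M[R]_(p, n)).
Hypothesis hFH : F^T *m H = - 1%:M.
Hypothesis hp : p = (n + 2)%N.
Variables (E : 'M[R]_(2, p)) (Q : 'M[R]_(n, 2)).
Hypothesis hEH : E *m H = 0.
Hypothesis hEF : E *m F *m Q = 1%:M.

Local Notation M := (H^T *m H).
Local Notation S := (F^T *m F).

Lemma hHF : H^T *m F = - 1%:M.
Proof. by rewrite -[H^T *m F]trmxK trmx_mul trmxK hFH trN trmx1. Qed.

Lemma M_unit : M \in unitmx.
Proof.
rewrite -row_free_unit; apply: inj_row_free => v hv.
have h0 : v *m H^T = 0.
  apply: sq_eq0; rewrite /sq trmx_mul trmxK mulmxA -(mulmxA v) hv mul0mx.
  by rewrite mxE.
by rewrite -[v]mulmx1 -[1%:M]opprK -hHF mulmxN mulmxA h0 mul0mx oppr0.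
Qed.

Local Notation Mi := (invmx M).

Lemma Mi_sym : Mi^T = Mi.
Proof. by rewrite trmx_inv trmx_mul trmxK. Qed.

Local Notation G := (F + H *m Mi).

Lemma GtH : G^T *m H = 0.
Proof.
rewrite trD trmx_mul Mi_sym mulmxDl hFH -mulmxA mulVmx ?M_unit //.
by rewrite addNr.
Qed.

Lemma GtG : G^T *m G = S - Mi.
Proof.
rewrite trD trmx_mul Mi_sym !mulmxDl !mulmxDr.
rewrite !mulmxA hFH -(mulmxA Mi) hHF mulmxN mulmx1 mulNmx mul1mx.
rewrite -(mulmxA Mi H^T H) mulVmx ?M_unit // mul1mx.
by rewrite addNr addr0.
Qed.

Local Notation D := (S - Mi).

Lemma rankH : (n <= \rank H)%N.
Proof.
have := mxrankM_maxr F^T H; rewrite hFH mxrank_opp mxrank1 //.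
Qed.

Lemma rankD_le : (\rank D <= 2)%N.
Proof.
rewrite -GtG (leq_trans (mxrankM_maxl _ _)) //.
have h : (G^T <= kermx H)%MS by apply/sub_kermxP; exact: GtH.
rewrite (leq_trans (mxrankS h)) // mxrank_ker; have := rankH; lia.
Qed.

Lemma kerD_sub : (kermx D <= kermx G^T)%MS.
Proof.
apply/sub_kermxP/row_matrixP => i; rewrite row_mul row0.
set r := row i (kermx D).
have hr : r *m D = 0 by rewrite /r -row_mul mulmx_ker row0.
apply: sq_eq0; rewrite /sq trmx_mul trmxK mulmxA -(mulmxA r) GtG hr mul0mx.
by rewrite mxE.
Qed.

Lemma rankD_ge : (2 <= \rank D)%N.
Proof.
have h1 : \rank (E *m G *m Q) = 2%N.
  by rewrite mulmxDr mulmxA hEH mul0mx addr0 hEF mxrank1.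
have h2 : (2 <= \rank G)%N.
  by rewrite -h1 (leq_trans (mxrankM_maxl _ _)) // mxrankM_maxr.
have h3 := mxrankS kerD_sub; rewrite !mxrank_ker mxrank_tr in h3.
have h4 := rank_leq_row D; have h5 := rank_leq_col G; lia.
Qed.

Lemma rankD : \rank D = 2%N.
Proof. by apply/eqP; rewrite eqn_leq rankD_le rankD_ge. Qed.

Local Notation I := (1%:M : 'M[R]_n).
Local Notation Pi := (1%:M - D *m pinvmx D).

Lemma PiD : Pi *m D = 0.
Proof. by rewrite mulmxBl mul1mx mulmxKpV // subrr. Qed.

Lemma kill1 (Z : 'M[R]_n) (x : 'rV[R]_(n * n * n)) : x *m (D *t I *t I) = 0 -> x *m ((1%:M - D *m Z) *t I *t I) = x.
Proof.
move=> h; rewrite !tensmxBl tens111 mulmxBr mulmx1.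
have e : (D *m Z) *t I *t I = (D *t I *t I) *m (Z *t I *t I).
  by rewrite tmul3 !mulmx1.
by rewrite e mulmxA h mul0mx subr0.
Qed.

Lemma kill2 (Z : 'M[R]_n) (x : 'rV[R]_(n * n * n)) : x *m (I *t D *t I) = 0 -> x *m (I *t (1%:M - D *m Z) *t I) = x.
Proof.
move=> h; rewrite tensmxBr tensmxBl tens111 mulmxBr mulmx1.
have e : I *t (D *m Z) *t I = (I *t D *t I) *m (I *t Z *t I).
  by rewrite tmul3 !mulmx1.
by rewrite e mulmxA h mul0mx subr0.
Qed.

Lemma kill3 (Z : 'M[R]_n) (x : 'rV[R]_(n * n * n)) : x *m (I *t I *t D) = 0 -> x *m (I *t I *t (1%:M - D *m Z)) = x.
Proof.
move=> h; rewrite tensmxBr tens111 mulmxBr mulmx1.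
have e : I *t I *t (D *m Z) = (I *t I *t D) *m (I *t I *t Z).
  by rewrite tmul3 !mulmx1.
by rewrite e mulmxA h mul0mx subr0.
Qed.

Lemma kill_all (Z : 'M[R]_n) (x : 'rV[R]_(n * n * n)) :
  x *m (D *t I *t I) = 0 -> x *m (I *t D *t I) = 0 -> x *m (I *t I *t D) = 0 ->
  x *m ((1%:M - D *m Z) *t (1%:M - D *m Z) *t (1%:M - D *m Z)) = x.
Proof.
move=> h1 h2 h3.
have e : (1%:M - D *m Z) *t (1%:M - D *m Z) *t (1%:M - D *m Z) = ((1%:M - D *m Z) *t I *t I) *m (I *t (1%:M - D *m Z) *t I) *m (I *t I *t (1%:M - D *m Z)).
  by rewrite !tmul3 !mulmx1 !mul1mx.
by rewrite e !mulmxA kill1 // kill2 // kill3.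
Qed.

Lemma D_sym : D^T = D.
Proof. by rewrite -GtG trmx_mul trmxK. Qed.
Lemma M_sym : M^T = M.
Proof. by rewrite trmx_mul trmxK. Qed.

Lemma from_sq m q (x : 'rV[R]_m) (Y : 'M[R]_(m, q)) (X C T : 'M[R]_m) :
  X = Y *m Y^T -> X *m C = T -> sq (x *m Y) = 0 -> x *m T = 0.
Proof.
by move=> eX <- h; rewrite eX !mulmxA (sq_eq0 h) !mul0mx.
Qed.

Lemma ker_vec (u w : 'rV[R]_(n * n * n)) : row_mx u w *m blockH D M = 0 ->
  [/\ u *m (D *t I *t I) = 0, u *m (I *t D *t I) = 0 & u *m (I *t I *t D) = 0] /\
  [/\ w *m (D *t I *t I) = 0, w *m (I *t D *t I) = 0 & w *m (I *t I *t D) = 0].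
Proof.
move=> h.
have hz : (row_mx u w *m blockH D M *m (row_mx u w)^T) 0 0 = 0.
  by rewrite h mul0mx mxE.
rewrite /blockH /= bil_block !bilD in hz.
have e1 : D *t M *t I = (G *t H *t I)^T *m ((G *t H *t I)^T)^T.
  by rewrite trmxK ttr3 tmul3 GtG trmx1 mulmx1.
have e2 : I *t M *t D = (I *t H *t G)^T *m ((I *t H *t G)^T)^T.
  by rewrite trmxK ttr3 tmul3 GtG trmx1 mulmx1.
have e3 : M *t D *t I = (H *t G *t I)^T *m ((H *t G *t I)^T)^T.
  by rewrite trmxK ttr3 tmul3 GtG trmx1 mulmx1.
have e4 : M *t I *t D = (H *t I *t G)^T *m ((H *t I *t G)^T)^T.
  by rewrite trmxK ttr3 tmul3 GtG trmx1 mulmx1.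
have e5 : D *t I *t M = (G *t I *t H)^T *m ((G *t I *t H)^T)^T.
  by rewrite trmxK ttr3 tmul3 GtG trmx1 mulmx1.
have e6 : I *t D *t M = (I *t G *t H)^T *m ((I *t G *t H)^T)^T.
  by rewrite trmxK ttr3 tmul3 GtG trmx1 mulmx1.
have sym5 : (D *t I *t M)^T = D *t I *t M by rewrite ttr3 D_sym trmx1 M_sym.
have sym6 : (I *t D *t M)^T = I *t D *t M by rewrite ttr3 D_sym trmx1 M_sym.
rewrite (bilC w u sym5) (bilC w u sym6) in hz.
have s1 : bil (D *t M *t I) u u = sq (u *m (G *t H *t I)^T) by rewrite e1 bilYY.
have s2 : bil (I *t M *t D) u u = sq (u *m (I *t H *t G)^T) by rewrite e2 bilYY.
have s3 : bil (M *t D *t I) w w = sq (w *m (H *t G *t I)^T) by rewrite e3 bilYY.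
have s4 : bil (M *t I *t D) w w = sq (w *m (H *t I *t G)^T) by rewrite e4 bilYY.
have s5 : sq ((u + w) *m (G *t I *t H)^T) = bil (D *t I *t M) u u +
   2 * bil (D *t I *t M) u w + bil (D *t I *t M) w w.
  by rewrite -bilYY -e5 bilDl !bilDr (bilC w u sym5); ring.
have s6 : sq ((u + w) *m (I *t G *t H)^T) = bil (I *t D *t M) u u +
   2 * bil (I *t D *t M) u w + bil (I *t D *t M) w w.
  by rewrite -bilYY -e6 bilDl !bilDr (bilC w u sym6); ring.
have g1 := sq_ge0 (u *m (G *t H *t I)^T).
have g2 := sq_ge0 (u *m (I *t H *t G)^T).
have g3 := sq_ge0 (w *m (H *t G *t I)^T).
have g4 := sq_ge0 (w *m (H *t I *t G)^T).
have g5 := sq_ge0 ((u + w) *m (G *t I *t H)^T).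
have g6 := sq_ge0 ((u + w) *m (I *t G *t H)^T).
have q1 : sq (u *m (G *t H *t I)^T) = 0 by lra.
have q2 : sq (u *m (I *t H *t G)^T) = 0 by lra.
have q3 : sq (w *m (H *t G *t I)^T) = 0 by lra.
have q4 : sq (w *m (H *t I *t G)^T) = 0 by lra.
have q5 : sq ((u + w) *m (G *t I *t H)^T) = 0 by lra.
have q6 : sq ((u + w) *m (I *t G *t H)^T) = 0 by lra.
have eu : u = (u + w) - w by rewrite addrK.
have ew : w = (u + w) - u by rewrite [u + w]addrC addrK.
have hMi : M *m Mi = I by rewrite mulmxV // M_unit.
have r1 : u *m (D *t I *t I) = 0.
  by apply: (from_sq (C := I *t Mi *t I) e1) q1; rewrite tmul3 hMi !mulmx1.
have r2 : u *m (I *t I *t D) = 0.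
  by apply: (from_sq (C := I *t Mi *t I) e2) q2; rewrite tmul3 hMi !mulmx1.
have r3 : w *m (I *t D *t I) = 0.
  by apply: (from_sq (C := Mi *t I *t I) e3) q3; rewrite tmul3 hMi !mulmx1.
have r4 : w *m (I *t I *t D) = 0.
  by apply: (from_sq (C := Mi *t I *t I) e4) q4; rewrite tmul3 hMi !mulmx1.
have r5 : (u + w) *m (D *t I *t I) = 0.
  by apply: (from_sq (C := I *t I *t Mi) e5) q5; rewrite tmul3 hMi !mulmx1.
have r6 : (u + w) *m (I *t D *t I) = 0.
  by apply: (from_sq (C := I *t I *t Mi) e6) q6; rewrite tmul3 hMi !mulmx1.
split; split => //.
- by rewrite eu mulmxBl r6 r3 subr0.
- by rewrite ew mulmxBl r5 r1 subr0.
Qed.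

Local Notation Kb := (row_base (kermx D)).

Lemma KbD : Kb *m D = 0.
Proof. by apply/sub_kermxP; rewrite eq_row_base. Qed.

Lemma Pi_Kb : exists Y, 1%:M - D *m pinvmx D = Y *m Kb.
Proof. by apply/submxP; rewrite eq_row_base; apply/sub_kermxP; exact: PiD. Qed.

Theorem kerB_rank : \rank (kermx (blockH D M)) = (2 * (n - 2) ^ 3)%N.
Proof.
have /row_freeP [Rb hRb] := row_base_free (kermx D).
have [Y hY] := Pi_Kb.
set T := Kb *t Kb *t Kb.
set Bd := block_mx T 0 0 T.
have hT : T *m (Rb *t Rb *t Rb) = 1%:M by rewrite tmul3 hRb tens111.
have rBd : \rank Bd = (\rank (kermx D) * \rank (kermx D) * \rank (kermx D) +
     \rank (kermx D) * \rank (kermx D) * \rank (kermx D))%N.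
  apply: (rank_rinv (Y := block_mx (Rb *t Rb *t Rb) 0 0 (Rb *t Rb *t Rb))).
  by rewrite mulmx_block hT !mulmx0 !mul0mx !addr0 !add0r -scalar_mx_block.
have s1 : (Bd <= kermx (blockH D M))%MS.
  apply/sub_kermxP; rewrite /blockH /= mulmx_block !mul0mx !addr0 !add0r.
  rewrite !mulmxDr !tmul3 !KbD !(tens0l, tens0r) !addr0.
  by rewrite block_mx0.
have s2 : (kermx (blockH D M) <= Bd)%MS.
  apply/row_subP => i.
  set v := row i (kermx _).
  have hv : v *m blockH D M = 0 by rewrite /v -row_mul mulmx_ker row0.
  rewrite -(hsubmxK v) in hv *.
  have [[u1 u2 u3] [w1 w2 w3]] := ker_vec hv.
  have hu := kill_all (pinvmx D) u1 u2 u3.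
  have hw := kill_all (pinvmx D) w1 w2 w3.
  rewrite hY -tmul3 in hu hw.
  rewrite -hu -hw !mulmxA.
  set a := lsubmx v *m _; set b := rsubmx v *m _.
  have -> : row_mx (a *m T) (b *m T) = row_mx a b *m Bd.
    by rewrite mul_row_block !mulmx0 addr0 add0r.
  exact: submxMl.
have hk : \rank (kermx D) = (n - 2)%N by rewrite mxrank_ker rankD.
have h1 := mxrankS s1; have h2 := mxrankS s2.
rewrite rBd hk in h1 h2.
have e : ((n - 2) * (n - 2) * (n - 2) + (n - 2) * (n - 2) * (n - 2) =
   2 * (n - 2) ^ 3)%N.
  by rewrite addnn -mul2n !expnS expn0 muln1 !mulnA.
by apply/eqP; rewrite eqn_leq -e h1 h2.
Qed.

End Kern.
End Tens.

Section Conc.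
Variable R : realType.
Variable N' : nat.
Local Notation ip := (@ip R).
Local Notation phi := (@phi R).
Local Notation psi := (@psi R).
Local Notation sp := (@sp R).

Definition Hm : 'M[R]_(N'.+4, N'.+2) := \matrix_(k, j) ip (psi j.+1) (phi k).
Definition Fm : 'M[R]_(N'.+4, N'.+2) := \matrix_(k, j) ip (phi j.+1)^`() (phi k).

Lemma size_psi_j (j : 'I_N'.+2) : (size (psi j.+1) <= N'.+4)%N.
Proof. have h := @size_psi R j.+1; have := ltn_ord j; lia. Qed.

Lemma size_dphi_j (j : 'I_N'.+2) : (size (phi j.+1)^`() <= N'.+4)%N.
Proof. have h := @size_dphi R j.+1; have := ltn_ord j; lia. Qed.

Lemma Mmx_eq : @Mmx R N'.+3 = Hm^T *m Hm.
Proof.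
apply/matrixP => i j; rewrite !mxE (ipexp _ (size_psi_j j)).
by apply: eq_bigr => k _; rewrite !mxE mulrC.
Qed.

Lemma Smx_eq : @Smx R N'.+3 = Fm^T *m Fm.
Proof.
apply/matrixP => i j; rewrite !mxE (ipexp _ (size_dphi_j j)).
by apply: eq_bigr => k _; rewrite !mxE mulrC.
Qed.

Lemma FH : Fm^T *m Hm = - 1%:M.
Proof.
apply/matrixP => i j; rewrite !mxE.
have -> : \sum_k Fm^T i k * Hm k j = ip (phi i.+1)^`() (psi j.+1).
  by rewrite (ipexp _ (size_dphi_j i)); apply: eq_bigr => k _; rewrite !mxE.
rewrite ibp !hornerM psi1 // psim1 // !mulr0 subrr sub0r dpsi // ortho_phi.
by rewrite eqSS.
Qed.

Definition pt (r : 'I_2) : R := if (r : nat) == 0%N then 1 else -1.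

Definition Em : 'M[R]_(2, N'.+4) := \matrix_(r, k) (phi k).[pt r].

Lemma hor_expand (p : {poly R}) (x : R) : (size p <= N'.+4)%N ->
  \sum_(k < N'.+4) (phi k).[x] * ip p (phi k) = p.[x].
Proof.
move=> hp; rewrite {2}(expand hp) horner_sum; apply: eq_bigr => k _.
by rewrite [in RHS]hornerZ mulrC.
Qed.

Lemma EH : Em *m Hm = 0.
Proof.
apply/matrixP => r j; rewrite !mxE.
transitivity (psi j.+1).[pt r].
  by rewrite -(hor_expand _ (size_psi_j j)); apply: eq_bigr => k _; rewrite !mxE.
by rewrite /pt; case: ifP => _; rewrite ?psi1 ?psim1.
Qed.

Lemma EF r j : (Em *m Fm) r j = ((phi j.+1)^`()).[pt r].
Proof.
rewrite !mxE -(hor_expand _ (size_dphi_j j)); apply: eq_bigr => k _.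
by rewrite !mxE.
Qed.

Definition qa : R := (2 * sp 1)^-1.
Definition qb : R := (2 * (3 * sp 2))^-1.

Definition Qm : 'M[R]_(N'.+2, 2) := \matrix_(j, c)
  (if (j : nat) == 0%N then qa else if (j : nat) == 1%N then
     (if (c : nat) == 0%N then qb else - qb) else 0).

Lemma EFQ : Em *m Fm *m Qm = 1%:M.
Proof.
apply/matrixP => r c; rewrite [LHS]mxE !big_ord_recl big1 ?addr0; last first.
  by move=> j _; rewrite !mxE /= mulr0.
rewrite !EF /= !mxE /= dphi1 dphi2 hornerC hornerZ hornerX /qa /qb.
have h1 := sp_gt0 R 1; have h2 := sp_gt0 R 2.
have e2 : 2 * sp 1 != 0 by rewrite mulf_neq0 ?gt_eqF.
have e3 : 3 * sp 2 != 0 by rewrite mulf_neq0 ?gt_eqF.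
case: r => [[|[|r']] hr] //; case: c => [[|[|c']] hc] //;
  rewrite -val_eqE /pt /=; field; rewrite ?gt_eqF //.
Qed.

End Conc.

Section Fin.
Variable R : realType.

Lemma eig_rank m (A At : 'M[R]_m) : At \in unitmx ->
  \rank (eigenspace (invmx At *m A)^T 1) = \rank (kermx (A - At)).
Proof.
move=> hu; rewrite /eigenspace !mxrank_ker; congr (_ - _)%N.
rewrite -trmx1 -trB mxrank_tr.
have -> : invmx At *m A - 1%:M = invmx At *m (A - At).
  by rewrite mulmxBr mulVmx.
by rewrite eqmxMfull // row_full_unit unitmx_inv.
Qed.

Lemma blockA_diff n (S Mi M : 'M[R]_n) (k : R) :
  blockA S M k - blockA Mi M k = blockH (S - Mi) M.
Proof.
rewrite /blockA /blockH /= opp_block_mx add_block_mx.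
by congr block_mx; apply/matrixP => i j; rewrite !mxE; ring.
Qed.

End Fin.

Unset Implicit Arguments.
Theorem mainTheorem11 (R : realType) (N : nat) (kappa : R) :
  (4 <= N)%N ->
  Atilde N kappa \in unitmx ->
  \rank (eigenspace (invmx (Atilde N kappa) *m Amx N kappa)^T 1)
    = (2 * (N - 3) ^ 3)%N.
Proof.
case: N => [|[|[|N']]] // _ hu.
rewrite eig_rank // /Amx /Atilde blockA_diff Mmx_eq Smx_eq.
rewrite (kerB_rank (@FH R N') _ (@EH R N') (@EFQ R N')); last by rewrite addn2.
by rewrite subSS subSS subn0 subSS subSS subSS subn0.
Qed.
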